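(* Let $p\in\mathcal H(2,d)$ and suppose $p(x,y)=a(x)+y\,b(x)$ for polynomials $a,b$ in one variable. Then $N(p)\ge d+1$; the monomial $x^d$ occurs in $p$, and for each $j$ with $0\le j\le d-1$ the monomial $x^jy$ occurs in $p$. Moreover $N(p)=d+1$ if and only if $p(x,y)=x^d+y(x^{d-1}+\cdots+x+1)$.
   Context: $\mathcal H(2,d)$ is the set of real polynomials in $(x,y)$ of total degree exactly $d$, with all coefficients nonnegative, such that $p(x,y)=1$ whenever $x+y=1$. $N(p)$ denotes the number of distinct monomials occurring with nonzero coefficient in $p$. *)

(* Defs.v *)
From HB Require Import structures.
From mathcomp Require Import all_boot all_order all_algebra.
From mathcomp Require Import mpoly.
Set Implicit Arguments. Unset Strict Implicit. Unset Printing Implicit Defensive.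
Import Order.TTheory GRing.Theory Num.Theory.
Local Open Scope ring_scope.

Definition mxy (i j : nat) : 'X_{1..2} := [multinom [tuple i; j]].

(* H(2,d): total degree exactly d (msize p = 1 + total degree, and
   msize 0 = 0, so this forces p <> 0), nonnegative coefficients,
   p(x,y) = 1 whenever x + y = 1 *)
Definition inH2 (R : realFieldType) (d : nat) (p : {mpoly R[2]}) : Prop :=
  [/\ msize p = d.+1,
      (forall m, 0 <= p@_m) &
      (forall x y : R, x + y = 1 -> p.@[tnth [tuple x; y]] = 1)].

Definition Nmon (R : realFieldType) (p : {mpoly R[2]}) : nat := size (msupp p).

Definition inX (R : realFieldType) (a : {poly R}) : {mpoly R[2]} :=
  (map_poly (@mpolyC 2 R) a).['X_0].

(* Main.v *)
Require Import Defs.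
From HB Require Import structures.
From mathcomp Require Import all_boot all_order all_algebra.
From mathcomp Require Import mpoly.
From mathcomp Require Import ring.
Import Order.TTheory GRing.Theory Num.Theory.
Local Open Scope ring_scope.
Set Implicit Arguments. Unset Strict Implicit. Unset Printing Implicit Defensive.

Section S.
Variable R : realFieldType.
Implicit Types a b : {poly R}.

Lemma mxy0 i j : mxy i j ord0 = i. Proof. by rewrite /mxy multinomE. Qed.
Lemma mxy1 i j : mxy i j ord_max = j. Proof. by rewrite /mxy multinomE. Qed.
Lemma mxyE (m : 'X_{1..2}) : m = mxy (m ord0) (m ord_max).
Proof. apply/mnmP => i; case: i => [[|[|//]] Hi]; rewrite /mxy multinomE /=;
  by congr (m _); apply: val_inj.
Qed.
Lemma mxy_eq i j i' j' : (mxy i j == mxy i' j') = (i == i') && (j == j').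
Proof.
apply/eqP/andP => [E|[/eqP -> /eqP ->] //].
by rewrite -(mxy0 i j) -(mxy1 i j) E mxy0 mxy1.
Qed.
Lemma mdeg_mxy i j : mdeg (mxy i j) = (i + j)%N.
Proof. by rewrite mdegE big_ord_recl big_ord1 /mxy !multinomE. Qed.

Lemma U0n i : (U_(ord0 : 'I_2) *+ i)%MM = mxy i 0.
Proof. apply/mnmP => k; rewrite mulmnE mnm1E; case: k => [[|[|//]] Hi]; rewrite /mxy multinomE /=.
 by rewrite mul1n. by rewrite mul0n. Qed.
Lemma U10n i : (U_(ord_max : 'I_2) + U_(ord0 : 'I_2) *+ i)%MM = mxy i 1.
Proof. apply/mnmP => k; rewrite mnmDE mulmnE !mnm1E; case: k => [[|[|//]] Hi]; rewrite /mxy multinomE /=.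
 by rewrite mul1n. by rewrite mul0n. Qed.
Lemma inXE a : inX a = \sum_(i < size a) a`_i *: 'X_[mxy i 0].
Proof.
rewrite /inX (@horner_coef_wide _ (size a)); last by rewrite size_map_poly.
apply: eq_bigr => i _; rewrite coef_map /= mul_mpolyC mpolyXn U0n //.
Qed.

Lemma sum_delta a (c : nat) : \sum_(k < size a) a`_k * (k == c :> nat)%:R = a`_c.
Proof.
case: (ltnP c (size a)) => h.
  rewrite (bigD1 (Ordinal h)) //= eqxx mulr1 big1 ?addr0 // => k hk.
  have -> : (k == c :> nat) = false; last by rewrite mulr0.
  by apply/negbTE; apply: contra hk => /eqP E; apply/eqP/val_inj.
rewrite nth_default // big1 // => k _.
by case: eqP => [E|]; [have := ltn_ord k; rewrite E ltnNge h | rewrite mulr0].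
Qed.

Lemma X1M i : ('X_1 : {mpoly R[2]}) * 'X_[mxy i 0] = 'X_[mxy i 1].
Proof. rewrite -mpolyXD; congr 'X_[_]; apply/mnmP=> k; rewrite mnmDE mnm1E.
by case: k => [[|[|//]] Hi]; rewrite /mxy !multinomE. Qed.

Lemma coefP a b m : (inX a + 'X_1 * inX b)@_m =
  if m ord_max == 0%N then a`_(m ord0) else if m ord_max == 1%N then b`_(m ord0) else 0.
Proof.
rewrite mcoeffD !inXE mulr_sumr !raddf_sum /=.
rewrite (eq_bigr (fun i : 'I_(size a) => a`_i * ((m ord_max == 0%N) && (i == m ord0 :> nat))%:R)); last first.
  by move=> i _; rewrite mcoeffZ mcoeffX [m in _ == m]mxyE mxy_eq andbC (eq_sym 0%N).
rewrite (eq_bigr (fun i : 'I_(size b) => b`_i * ((m ord_max == 1%N) && (i == m ord0 :> nat))%:R)); last first.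
  move=> i _; rewrite -scalerAr mcoeffZ X1M mcoeffX [m in _ == m]mxyE mxy_eq andbC eq_sym.
  done.
case: eqP => h0.
  rewrite h0 /= [X in _ + X]big1 ?addr0 ?sum_delta // => i _.
  by rewrite mulr0.
rewrite /= big1 ?add0r => [|i _]; last by rewrite mulr0.
case: eqP => h1 /=; first exact: sum_delta.
by rewrite big1 // => i _; rewrite mulr0.
Qed.

Lemma inX_eval a (v : 'I_2 -> R) : (inX a).@[v] = a.[v ord0].
Proof.
rewrite inXE raddf_sum /= horner_coef; apply: eq_bigr => i _.
rewrite mevalZ mevalX big_ord_recl big_ord1 /mxy !multinomE /= expr0 mulr1 //.
Qed.
Lemma allroots0 (q : {poly R}) : (forall x, q.[x] = 0) -> q = 0.
Proof.
move=> h; apply/eqP; apply: contraT => nz.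
have := max_poly_roots nz (rs := [seq i%:R | i <- iota 0 (size q)]).
rewrite size_map size_iota ltnn; apply.
  by apply/allP => x _; apply/rootP.
rewrite map_inj_uniq ?iota_uniq // => i j /eqP; by rewrite eqr_nat => /eqP.
Qed.

Lemma inXXn d : inX ('X^d : {poly R}) = 'X_0 ^+ d.
Proof. by rewrite /inX map_polyXn hornerXn. Qed.

Lemma inXsum d : inX (\poly_(j < d) (1 : R)) = \sum_(j < d) 'X_0 ^+ j.
Proof.
rewrite /inX poly_def raddf_sum horner_sum; apply: eq_bigr => i _.
by rewrite scale1r /= map_polyXn hornerXn.
Qed.
End S.

Theorem lemma7 (R : realFieldType) (d : nat) (p : {mpoly R[2]})
    (a b : {poly R}) :
  inH2 d p ->
  p = inX a + 'X_1 * inX b ->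
  [/\ (d.+1 <= Nmon p)%N,
      mxy d 0 \in msupp p,
      (forall j : nat, (j < d)%N -> mxy j 1 \in msupp p) &
      (Nmon p = d.+1 <->
         p = 'X_0 ^+ d + 'X_1 * \sum_(j < d) 'X_0 ^+ j)].
Proof.
move=> [Hsz Hpos Hev] Hp.
have Heval x : a.[x] + (1 - x) * b.[x] = 1.
  have := Hev x (1 - x) ltac:(by rewrite addrC subrK).
  by rewrite Hp mevalD mevalM mevalXU !inX_eval.
have Hpoly : a = 1 - (1 - 'X) * b.
  apply/eqP; rewrite -subr_eq0; apply/eqP; apply: allroots0 => x.
  rewrite !hornerE; transitivity (a.[x] + (1 - x) * b.[x] - 1); first by ring.
  by rewrite Heval subrr.
pose c k := if k is k'.+1 then b`_k' else (1:R).
have coefa k : a`_k = c k - c k.+1.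
  rewrite Hpoly coefB coef1 mulrBl mul1r coefB coefXM.
  by case: k => [|k] /=; ring.
have pa k : p@_(mxy k 0) = a`_k by rewrite Hp coefP mxy0 mxy1.
have pb k : p@_(mxy k 1) = b`_k by rewrite Hp coefP mxy0 mxy1.
have ca k : c k.+1 <= c k by rewrite -subr_ge0 -coefa -pa.
have bz k : (d <= k)%N -> b`_k = 0.
  move=> h; rewrite -pb; apply: memN_msupp_eq0; apply: msize_mdeg_ge.
  by rewrite Hsz mdeg_mxy addn1 ltnS.
have cz k : (d < k)%N -> c k = 0 by case: k => // k h; exact: bz.
have cmono k n : c (k + n)%N <= c k.
  elim: n => [|n IH]; first by rewrite addn0.
  by rewrite addnS (le_trans (ca _)).
have cd0 : c d != 0.
  case Ed: d => [|d']; first by rewrite oner_neq0.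
  rewrite Ed in Hsz.
  have pn0 : p != 0 by apply/eqP => p0; move: Hsz; rewrite p0 msize0.
  have := mlead_supp pn0; have := mlead_deg pn0; rewrite Hsz => -[].
  rewrite mcoeff_msupp; move: (mlead p) => m.
  rewrite {1}(mxyE m) mdeg_mxy Hp coefP.
  move: (m ord0) (m ord_max) => m0 m1.
  case: m1 => [|[|m1]] /=.
  - rewrite addn0 => ->; by rewrite coefa (cz d'.+2) ?Ed // subr0.
  - by rewrite addn1 => -[->].
  - by rewrite eqxx.
have cpos : 0 < c d.
  rewrite lt_def cd0 /=; have := ca d; by rewrite (cz d.+1).
have cne k : (k <= d)%N -> c k != 0.
  move=> h; apply: lt0r_neq0; apply: (lt_le_trans cpos).
  have := cmono k (d - k)%N; by rewrite subnKC.
have hx : mxy d 0 \in msupp p.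
  by rewrite mcoeff_msupp pa coefa (cz d.+1) // subr0.
have hy j : (j < d)%N -> mxy j 1 \in msupp p.
  by move=> h; rewrite mcoeff_msupp pb; exact: (cne j.+1).
pose L := mxy d 0 :: [seq mxy j 1 | j <- iota 0 d].
have uniqL : uniq L.
  rewrite /L /= map_inj_uniq ?iota_uniq ?andbT.
    by apply/mapP => -[j _ /eqP]; rewrite mxy_eq andbC.
  by move=> i j /eqP; rewrite mxy_eq eqxx andbT => /eqP.
have subL : {subset L <= msupp p}.
  move=> m; rewrite inE => /orP [/eqP -> // | /mapP [j]].
  by rewrite mem_iota => /andP [_ hj] ->; exact: hy.
have sizeL : size L = d.+1 by rewrite /= size_map size_iota.
have hge : (d.+1 <= Nmon p)%N by rewrite /Nmon -sizeL; exact: uniq_leq_size.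
have form : 'X_0 ^+ d + 'X_1 * \sum_(j < d) 'X_0 ^+ j =
            inX 'X^d + 'X_1 * inX (\poly_(j < d) (1 : R)) by rewrite inXXn inXsum.
split => //.
split.
- move=> hN.
  have [_ eqL] := uniq_min_size uniqL subL ltac:(by rewrite /Nmon in hN; rewrite hN sizeL).
  have ak k : (k < d)%N -> a`_k = 0.
    move=> hk; rewrite -pa; apply: memN_msupp_eq0; rewrite -eqL inE mxy_eq.
    rewrite (ltn_eqF hk) /=; apply/mapP => -[j _ /eqP]; by rewrite mxy_eq andbC.
  have c1 k : (k <= d)%N -> c k = 1.
    elim: k => [_|k IH hk]; first by [].
    have := ak k hk; rewrite coefa (IH (ltnW hk)).
    by move/eqP; rewrite subr_eq0 eq_sym => /eqP.
  have ea : a = 'X^d.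
    apply/polyP => k; rewrite coefXn coefa.
    case: (ltngtP k d) => h.
    + by rewrite !c1 ?subrr // ltnW.
    + by rewrite !cz ?subrr // ltnW.
    + by rewrite h c1 // (cz d.+1) // subr0.
  have eb : b = \poly_(j < d) 1.
    apply/polyP => k; rewrite coef_poly; case: ltnP => h.
    + by rewrite -/(c k.+1) c1.
    + by rewrite bz.
  by rewrite Hp form ea eb.
- move=> hp; rewrite /Nmon; apply/eqP; rewrite eqn_leq hge andbT -sizeL.
  apply: uniq_leq_size (msupp_uniq _) _ => m.
  rewrite hp form mcoeff_msupp (mxyE m) coefP mxy0 mxy1 coefXn coef_poly.
  move: (m ord0) (m ord_max) => m0 m1.
  case: m1 => [|[|m1]] /=.
  + case: (eqVneq m0 d) => [->|ne]; [by rewrite mem_head | by rewrite eqxx].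
  + case: ltnP => h; last by move/negP => []; apply/eqP.
    move=> _; rewrite inE; apply/orP; right.
    by apply/mapP; exists m0; rewrite // mem_iota.
  + by move/negP => []; apply/eqP.
Qed.
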